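(* Let $G$, $w$, $\nu$ be as in the context. Let $\widehat{\mathcal{S}}=(S_m)_{m=0,\ldots,n}$, $n\ge1$, be a finite sequence of pairwise disjoint subsets of $V(G)$ with $\widehat{K}_m>0$ and $\widehat{D}_m>0$ for all $m=0,\ldots,n-1$. Then for all $1\le p<\infty$ and all $f\in\ell^p_\nu(G)$ with $f|_{V(G)\setminus S_0}=0$, \[ \|f|_{S_0}\|_{p,\nu}\le\frac{\hat\delta_{\widehat{\mathcal{S}},p}}{\hat a_{\widehat{\mathcal{S}},p}-1}\|\nabla_w f\|_p. \]
   Context: $G$ is an undirected weighted graph: $V(G)$ is a (countable) vertex set and $w:V(G)\times V(G)\to[0,\infty)$ is symmetric with $w(u,u)=0$. $\nu:V(G)\to(0,\infty)$ is a fixed vertex weight; $\|f\|_{p,\nu}=\left(\sum_v|f(v)|^p\nu(v)\right)^{1/p}$, $\|f|_A\|_{p,\nu}$ the same sum over $v\in A$. $\|\nabla_w f\|_p=\left(\sum_{u,v\in V(G)}|f(u)-f(v)|^pw(u,v)\right)^{1/p}$. $w_A(v)=\sum_{u\in A}w(u,v)$. For $0\le m<n$: $\widehat{K}_m=\inf_{v\in S_m}\frac{w_{S_{m+1}}(v)}{\nu(v)}$, $\widehat{D}_m=\sup_{v\in S_{m+1}}\frac{w_{S_m}(v)}{\nu(v)}$; $\hat a_{\widehat{\mathcal{S}},p}=\left(\sum_{m=0}^n\prod_{j=0}^{m-1}\frac{\widehat{K}_j}{\widehat{D}_j}\right)^{1/p}$; $\hat\delta_{\widehat{\mathcal{S}},p}=\max_{k=0,\ldots,n-1}\frac{1}{\widehat{K}_k}\sum_{m=k}^n\prod_{i=k}^{m-1}\frac{\widehat{K}_i}{\widehat{D}_i}$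 for $p=1$, and $\hat\delta_{\widehat{\mathcal{S}},p}=\left(\sum_{m=1}^n\left(\sum_{k=0}^{m-1}\widehat{K}_k^{-q/p}\left(\prod_{i=k}^{m-1}\frac{\widehat{K}_i}{\widehat{D}_i}\right)^{q/p}\right)^{p/q}\right)^{1/p}$ for $1<p<\infty$, $1/p+1/q=1$. Empty products equal $1$, empty sums equal $0$. *)

(* Defs.v *)
From HB Require Import structures.
From mathcomp Require Import all_boot all_order all_algebra.
From mathcomp Require Import all_classical all_reals all_analysis.
Set Implicit Arguments. Unset Strict Implicit. Unset Printing Implicit Defensive.
Import Order.TTheory GRing.Theory Num.Theory.
Local Open Scope classical_set_scope.
Local Open Scope ring_scope.

Section Defs.
Variables (R : realType) (V : countType).

Definition lp_sum (p : R) (nu f : V -> R) (A : set V) : \bar R :=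
  esum A (fun v => ((`|f v| `^ p) * nu v)%:E).

Definition lp_norm (p : R) (nu f : V -> R) (A : set V) : \bar R :=
  poweR (lp_sum p nu f A) (p^-1).

Definition in_lp (p : R) (nu f : V -> R) : Prop :=
  (lp_sum p nu f setT < +oo)%E.

Definition grad_norm (p : R) (w : V -> V -> R) (f : V -> R) : \bar R :=
  poweR (esum [set: V * V]
           (fun uv => ((`|f uv.1 - f uv.2| `^ p) * w uv.1 uv.2)%:E)) (p^-1).

Definition wA (w : V -> V -> R) (A : set V) (v : V) : \bar R :=
  esum A (fun u => (w u v)%:E).

(* \hat K_m = inf_{v in S_m} w_{S_{m+1}}(v)/nu(v), taken as a real number
   (via fine; an infinite value is sent to 0, so the hypothesis K_m > 0
   forces it to be a genuine positive real). *)
Definition Khat (w : V -> V -> R) (nu : V -> R) (S : nat -> set V) (m : nat) : R :=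
  fine (ereal_inf [set (wA w (S m.+1) v * ((nu v)^-1)%:E)%E | v in S m]).

Definition Dhat (w : V -> V -> R) (nu : V -> R) (S : nat -> set V) (m : nat) : R :=
  fine (ereal_sup [set (wA w (S m) v * ((nu v)^-1)%:E)%E | v in S m.+1]).

Definition KDprod (w : V -> V -> R) (nu : V -> R) (S : nat -> set V) (k m : nat) : R :=
  \prod_(k <= i < m) (Khat w nu S i / Dhat w nu S i).

Definition ahat (w : V -> V -> R) (nu : V -> R) (S : nat -> set V) (n : nat) (p : R) : R :=
  (\sum_(0 <= m < n.+1) KDprod w nu S 0 m) `^ (p^-1).

Definition deltahat (w : V -> V -> R) (nu : V -> R) (S : nat -> set V) (n : nat) (p : R) : R :=
  if p == 1 then
    \big[Num.max/0]_(0 <= k < n)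
       ((Khat w nu S k)^-1 * \sum_(k <= m < n.+1) KDprod w nu S k m)
  else
    let q := p / (p - 1) in
    (\sum_(1 <= m < n.+1)
       (\sum_(0 <= k < m)
          (Khat w nu S k `^ (- (q / p))) * (KDprod w nu S k m `^ (q / p)))
         `^ (p / q)) `^ (p^-1).

End Defs.

(* Main.v *)
Set Warnings "-notation-overridden,-ambiguous-paths,-notation-incompatible-prefix".
Require Import Defs.
From HB Require Import structures.
From mathcomp Require Import all_boot all_order all_algebra.
From mathcomp Require Import all_classical all_reals all_analysis.
From mathcomp Require Import lra.
Import Order.TTheory GRing.Theory Num.Theory.
Local Open Scope classical_set_scope.
Local Open Scope ring_scope.
Lemma esumZ (R : realType) (T : choiceType) (S : set T) (a : T -> \bar R) (c : R) :
  0 <= c -> (forall x, (0 <= a x)%E) ->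
  esum S (fun x => c%:E * a x)%E = (c%:E * esum S a)%E.
Proof.
move=> c0 a0; rewrite /esum -ereal_supZl //; last first.
  by apply/set0P; exists 0%E; exists set0; [exact: fsets_set0|rewrite fsbig_set0].
congr ereal_sup; rewrite image_comp; apply: eq_imagel => A _ /=.
by rewrite ge0_mule_fsumr.
Qed.
Lemma esum_le_setT (R : realType) (T : choiceType) (I : set T) (a b : T -> \bar R) :
  (forall i, I i -> (a i <= b i)%E) -> (forall i, (0 <= b i)%E) ->
  (esum I a <= esum setT b)%E.
Proof.
move=> ab b0; rewrite esum_mkcond; apply: le_esum => i _.
by case: ifPn => [/[!inE] /ab|].
Qed.
Lemma Kle (R : realType) (V : countType) (w : V -> V -> R) (nu : V -> R) (S : nat -> set V)
  (nu_gt0 : forall v, 0 < nu v) (K0 : 0 < Khat w nu S 0) v :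
  S 0%N v -> ((Khat w nu S 0)%:E * (nu v)%:E <= wA w (S 1%N) v)%E.
Proof.
move=> Sv; move: K0; rewrite /Khat.
set X := [set _ | _ in _].
have lb : (ereal_inf X <= wA w (S 1%N) v * ((nu v)^-1)%:E)%E.
  by apply: ereal_inf_lbound; exists v.
case E: (ereal_inf X) lb => [x| |] //= lb; try by rewrite ltxx.
move=> _.
have -> : wA w (S 1%N) v = (wA w (S 1%N) v * ((nu v)^-1)%:E * (nu v)%:E)%E.
  by rewrite -muleA -EFinM mulVf ?mule1 // lt0r_neq0.
apply: lee_wpmul2r => //; rewrite ?lee_fin ?ltW //.
Qed.

Lemma key (R : realType) (V : countType)
  (w : V -> V -> R) (nu : V -> R)
  (w_ge0 : forall u v, 0 <= w u v)
  (w_sym : forall u v, w u v = w v u)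
  (nu_gt0 : forall v, 0 < nu v) (S : nat -> set V)
  (S01 : S 0%N `&` S 1%N = set0)
  (K0 : 0 < Khat w nu S 0) (p : R) (f : V -> R)
  (f_supp : forall v, ~ S 0%N v -> f v = 0) :
  ((Khat w nu S 0)%:E * lp_sum p nu f (S 0%N) <=
   esum [set: V * V] (fun uv => ((`|f uv.1 - f uv.2| `^ p) * w uv.1 uv.2)%:E))%E.
Proof.
rewrite /lp_sum -esumZ; last 2 first.
- exact: ltW.
- by move=> x; rewrite lee_fin mulr_ge0 ?powR_ge0 // ltW.
apply: (@le_trans _ _ (esum (S 0%N) (fun v => esum (S 1%N) (fun u => ((`|f v| `^ p) * w v u)%:E)))).
  apply: le_esum => v S0v.
  have -> : esum (S 1%N) (fun u => (`|f v| `^ p * w v u)%:E) = ((`|f v| `^ p)%:E * wA w (S 1%N) v)%E.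
    rewrite /wA -esumZ ?powR_ge0 //; last by move=> u; rewrite lee_fin.
    by apply: eq_esum => u _; rewrite EFinM w_sym.
  rewrite EFinM muleCA; apply: lee_wpmul2l; first by rewrite lee_fin powR_ge0.
  exact: Kle.
rewrite esum_esum; last by move=> i j _ _; rewrite lee_fin mulr_ge0 ?powR_ge0.
apply: esum_le_setT; last by move=> i; rewrite lee_fin mulr_ge0 ?powR_ge0.
move=> [v u] /= [S0v S1u].
have -> : f u = 0.
  apply: f_supp => S0u.
  have : (S 0%N `&` S 1%N) u by split.
  by rewrite S01.
by rewrite subr0.
Qed.
Lemma subadd_powR (R : realType) (t r : R) : 0 < t -> 0 <= r <= 1 ->
  (1 + t) `^ r <= 1 + t `^ r.
Proof.
move=> t0 /andP[r0 r1]; set s := 1 + t.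
have s0 : 0 < s by rewrite /s; lra.
have h x : 0 < x <= s -> s `^ r * (x / s) <= x `^ r.
  move=> /andP[x0 xs].
  have xs1 : 0 < x / s <= 1 by rewrite divr_gt0//= ler_pdivrMr// mul1r.
  have xe : x = (x / s) * s by rewrite divfK // lt0r_neq0.
  case/andP: xs1 => xs1 xs2.
  rewrite [X in _ <= X `^ r]xe powRM; [|exact: ltW|exact: ltW].
  by rewrite mulrC ler_wpM2r ?powR_ge0// ger1_powR//; apply/andP.
have h1 := h 1; have ht := h t.
have -> : s `^ r = s `^ r * (1 / s) + s `^ r * (t / s).
  by rewrite -mulrDr -mulrDl /s divff ?mulr1 // lt0r_neq0.
apply: lerD; [rewrite powR1 in h1; apply: h1|apply: ht]; rewrite /s; apply/andP; split; lra.
Qed.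
Lemma real_ineq (R : realType) (V : countType)
  (w : V -> V -> R) (nu : V -> R) (n : nat) (S : nat -> set V)
  (n_ge1 : (1 <= n)%N)
  (K_gt0 : forall m, (m < n)%N -> 0 < Khat w nu S m)
  (D_gt0 : forall m, (m < n)%N -> 0 < Dhat w nu S m)
  (p : R) (p_ge1 : 1 <= p) :
  (Khat w nu S 0)^-1 `^ p^-1 <= deltahat w nu S n p / (ahat w nu S n p - 1).
Proof.
have Pk_gt0 k m : (m <= n)%N -> 0 < KDprod w nu S k m.
  move=> mn; rewrite /KDprod big_seq; apply: prodr_gt0 => i.
  rewrite mem_index_iota => /andP[_ im].
  by apply: divr_gt0; [apply: K_gt0|apply: D_gt0]; apply: leq_trans im mn.
have P0 : KDprod w nu S 0 0 = 1 by rewrite /KDprod big_geq.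
set t := \sum_(1 <= m < n.+1) KDprod w nu S 0 m.
have t0 : 0 < t.
  rewrite /t big_ltn //.
  have := Pk_gt0 0%N 1%N n_ge1.
  have : 0 <= \sum_(2 <= m < n.+1) KDprod w nu S 0 m.
    by rewrite big_seq; apply: sumr_ge0 => m; rewrite mem_index_iota => /andP[_ ?]; apply/ltW/Pk_gt0.
  lra.
have sE : \sum_(0 <= m < n.+1) KDprod w nu S 0 m = 1 + t by rewrite big_ltn // P0.
have Kp : 0 < Khat w nu S 0 := K_gt0 0%N n_ge1.
set K := Khat w nu S 0 in Kp *.
have Ki0 : 0 <= K^-1 by rewrite invr_ge0 ltW.
rewrite /ahat sE.
have [p1|p1] := eqVneq p 1.
  rewrite /deltahat p1 eqxx invr1 powRr1 // powRr1; last by lra.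
  rewrite ler_pdivlMr; last by lra.
  rewrite big_ltn // le_max; apply/orP; left.
  by rewrite -/K sE ler_wpM2l //; lra.
have pgt1 : 1 < p by rewrite lt_neqAle eq_sym p1 p_ge1.
set r := p^-1.
have r0 : 0 < r by rewrite /r invr_gt0; lra.
have r1 : r <= 1 by rewrite /r invf_le1 //; lra.
rewrite /deltahat (negbTE p1) /=.
set q := p / (p - 1).
have q0 : 0 < q by rewrite /q divr_gt0 //; lra.
set e := q / p.
have e0 : 0 < e by rewrite /e divr_gt0 //; lra.
have pq : p / q = e^-1 by rewrite /e (invf_div q p).
rewrite pq -/r.
have ee : e * e^-1 = 1 by rewrite divff // lt0r_neq0.
have inner m : (1 <= m)%N -> (m <= n)%N ->
   K^-1 * KDprod w nu S 0 m <=
   (\sum_(0 <= k < m) Khat w nu S k `^ (- e) * KDprod w nu S k m `^ e) `^ e^-1.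
  move=> m1 mn.
  have e'0 : 0 <= e^-1 by rewrite invr_ge0 ltW.
  apply: (@le_trans _ _ ((Khat w nu S 0 `^ (- e) * KDprod w nu S 0 m `^ e) `^ e^-1)).
    rewrite powRM ?powR_ge0 // -!powRrM ee mulNr ee powR_inv1 ?powRr1 //.
      exact/ltW/Pk_gt0.
    exact: ltW.
  apply: ge0_ler_powR => //; rewrite ?nnegrE ?mulr_ge0 ?powR_ge0 //.
    by rewrite big_seq; apply: sumr_ge0 => k _; rewrite mulr_ge0 ?powR_ge0.
  rewrite big_ltn // lerDl.
  by rewrite big_seq; apply: sumr_ge0 => k _; rewrite mulr_ge0 ?powR_ge0.
set O := \sum_(1 <= m < n.+1) _.
have Ot : K^-1 * t <= O.
  rewrite /t mulr_sumr /O !big_seq; apply: ler_sum => m.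
  by rewrite mem_index_iota => /andP[m1 mn]; apply: inner.
have a1 : 1 < (1 + t) `^ r.
  apply: (@le_lt_trans _ _ (1 `^ r)); first by rewrite powR1.
  apply: gt0_ltr_powR => //; rewrite ?nnegrE; lra.
rewrite ler_pdivlMr; last by lra.
apply: (@le_trans _ _ ((K^-1 * t) `^ r)); last first.
  apply: ge0_ler_powR; rewrite ?nnegrE ?mulr_ge0 //; first exact: ltW.
  exact: ltW.
  apply: le_trans Ot; rewrite mulr_ge0 //; exact: ltW.
rewrite powRM //; last exact: ltW.
rewrite ler_wpM2l ?powR_ge0 //.
have := @subadd_powR R t r t0; rewrite (ltW r0) r1 => /(_ isT); lra.
Qed.

Theorem corollary1p6 (R : realType) (V : countType)
  (w : V -> V -> R) (nu : V -> R)
  (w_ge0 : forall u v, 0 <= w u v)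
  (w_sym : forall u v, w u v = w v u)
  (w_diag : forall u, w u u = 0)
  (nu_gt0 : forall v, 0 < nu v)
  (n : nat) (S : nat -> set V)
  (n_ge1 : (1 <= n)%N)
  (S_disj : forall i j, (i <= n)%N -> (j <= n)%N -> i <> j -> S i `&` S j = set0)
  (K_gt0 : forall m, (m < n)%N -> 0 < Khat w nu S m)
  (D_gt0 : forall m, (m < n)%N -> 0 < Dhat w nu S m)
  (p : R) (p_ge1 : 1 <= p)
  (f : V -> R) (f_lp : in_lp p nu f)
  (f_supp : forall v, ~ S 0%N v -> f v = 0) :
  (lp_norm p nu f (S 0%N)
   <= (deltahat w nu S n p / (ahat w nu S n p - 1))%:E * grad_norm p w f)%E.
Proof.
have Kp : 0 < Khat w nu S 0 := K_gt0 0%N n_ge1.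
have S01 : S 0%N `&` S 1%N = set0 by apply: S_disj.
have hk := @key R V w nu w_ge0 w_sym nu_gt0 S S01 Kp p f f_supp.
have hr := @real_ineq R V w nu n S n_ge1 K_gt0 D_gt0 p p_ge1.
set K := Khat w nu S 0 in Kp hk hr.
set A := lp_sum p nu f (S 0%N) in hk *.
set B := esum _ _ in hk.
have A0 : (0 <= A)%E by apply: esum_ge0 => v _; rewrite lee_fin mulr_ge0 ?powR_ge0 // ltW.
have B0 : (0 <= B)%E by apply: esum_ge0 => v _; rewrite lee_fin mulr_ge0 ?powR_ge0.
have Ki0 : 0 <= K^-1 by rewrite invr_ge0 ltW.
have AB : (A <= K^-1%:E * B)%E.
  have -> : A = (K^-1%:E * (K%:E * A))%E by rewrite muleA -EFinM mulVf ?mul1e // lt0r_neq0.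
  by apply: lee_wpmul2l; rewrite ?lee_fin.
rewrite /lp_norm /grad_norm -/B -/A.
apply: (@le_trans _ _ (poweR (K^-1%:E * B) p^-1)).
  apply: gt0_ler_poweR => //; first by rewrite invr_ge0; apply: le_trans p_ge1.
  - by rewrite in_itv /= A0 leey.
  - by rewrite in_itv /= mule_ge0 ?leey // lee_fin.
rewrite poweRM ?lee_fin // poweR_EFin.
by apply: lee_wpmul2r; [exact: poweR_ge0|rewrite lee_fin].
Qed.
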